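(* Let $\mathcal{A}_I$ be an IOTS and $\mathcal{A}_S$ an LTS over the same action set $\mathit{Act}=L_I\sqcup L_O$. Then for every $M\in\mathbb{R}_{>0}$: $$\mathcal{A}_I\ \mathbf{ioco}\ \mathcal{A}_S \iff \chi^M(\mathcal{A}_I)\ \mathbf{tioco}_M\ \chi^M(\mathcal{A}_S).$$
   Context: An LTS is $\mathcal{A}=\langle S,\mathit{Act},\rightarrow,s_0\rangle$ with $S$ finite, $s_0\in S$, $\mathit{Act}=L_I\sqcup L_O$ finite, $\rightarrow\subseteq S\times\mathit{Act}\times S$ (no internal actions). An IOTS is an LTS in which every state has an outgoing transition on every input. A state is quiescent iff it has no outgoing output transition. Let $\delta$ be a fresh symbol, $\mathit{Act}^\delta=\mathit{Act}\cup\{\delta\}$. Define $s\ \mathbf{after}\ \varepsilon=\{s\}$; $s\ \mathbf{after}\ a=\{s' : a\in\mathit{Act},\ s\xrightarrow{a}s'\}\cup\{s : a=\delta,\ s\text{ quiescent}\}$; $s\ \mathbf{after}\ a\sigma=\bigcup\{s'\ \mathbf{after}\ \sigma : s'\in s\ \mathbf{after}\ a\}$; $\mathcal{A}\ \mathbf{after}\ \sigma=s_0\ \mathbf{after}\ \sigma$. $\mathbf{out}(s)=\{o\in L_O: s\xrightarrow{o}\}\cup\{\delta : s\text{ quiescent}\}$, extended to sets by union. $\mathit{Straces}(\mathcal{A})=\{\sigma\in(\mathit{Act}^\delta)^*:\mathcal{A}\ \mathbf{after}\ \sigma\neq\emptyset\}$. Then $\mathcal{A}_I\ \mathbf{ioco}\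 \mathcal{A}_S$ iff for all $\sigma\in\mathit{Straces}(\mathcal{A}_S)$: $\mathbf{out}(\mathcal{A}_I\ \mathbf{after}\ \sigma)\subseteq\mathbf{out}(\mathcal{A}_S\ \mathbf{after}\ \sigma)$. TA-ification: for $M>0$, $\chi^M(\mathcal{A})$ is the timed automaton with locations $S$, initial location $s_0$, labels $\mathit{Act}^\delta$ (inputs $L_I$, outputs $L_O$), single clock $c$, invariant $c\le M$ on every location, transitions $(\ell,a,c<M,\{c\},\ell')$ for each $(\ell,a,\ell')\in\rightarrow$ and $(\ell,\delta,c=M,\{c\},\ell)$ for each quiescent $\ell$. Every transition resets $c$, so $c=0$ upon entering a location; $\ell\xrightarrow{(d,a)}\ell'$ ($d\in\mathbb{R}_{\ge0}$) iff there is a transition $(\ell,a,\phi,\{c\},\ell')$ such that $c=d$ satisfies $\phi$ and the invariant of $\ell$. Timed notions for parameter $M$: a location $\ell$ is quiescent iff there are no $d<M$, $o\in L_O$ with $\ell\xrightarrow{(d,o)}$. $\mathbf{out}_M(\ell)=\{(d,o)\in\mathbb{R}_{\ge0}\times L_O:\ell\xrightarrow{(d,o)}\}\cup\{(M,\delta):\ell\text{ quiescent}\}$, extended to sets by union. $\ell\ \mathbf{after}_M\ \epsilon=\{\ell\}$, $\ell\ \mathbf{after}_M\ (d,a)=\{\ell':\ell\xrightarrow{(d,a)}\ell'\}\cup\{\ell:(d,a)=(M,\delta),\ \ell\text{ quiescent}\}$, $\ell\ \mathbf{after}_M\ (d,a)\rho=\bigcup\{\ell'\ \mathbf{after}_M\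 \rho:\ell'\in\ell\ \mathbf{after}_M\ (d,a)\}$; $\mathscr{A}\ \mathbf{after}_M\ \rho=\ell_0\ \mathbf{after}_M\ \rho$; $\mathit{Sttraces}_M(\mathscr{A})=\{\rho\in(\mathbb{R}_{\ge0}\times\mathit{Act}^\delta)^*:\mathscr{A}\ \mathbf{after}_M\ \rho\neq\emptyset\}$. An IOTA is a TA in which every location $\ell$ satisfies $\ell\xrightarrow{(d,i)}$ for all $i\in L_I$ and all $d<M$. For an IOTA $\mathscr{A}_I$ and TA $\mathscr{A}_S$: $\mathscr{A}_I\ \mathbf{tioco}_M\ \mathscr{A}_S$ iff for all $\rho\in\mathit{Sttraces}_M(\mathscr{A}_S)$: $\mathbf{out}_M(\mathscr{A}_I\ \mathbf{after}_M\ \rho)\subseteq\mathbf{out}_M(\mathscr{A}_S\ \mathbf{after}_M\ \rho)$. *)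

(* Defs.v *)
From mathcomp Require Import all_boot.
From Stdlib Require Import Reals.

Set Implicit Arguments.
Unset Strict Implicit.
Unset Printing Implicit Defensive.

(* Act = L_I ⊔ L_O is the disjoint sum LI + LO (inputs inl, outputs inr). *)
Record LTS (LI LO : finType) := {
  st : finType;
  s0 : st;
  trans : st -> (LI + LO)%type -> st -> bool
}.

Inductive dlab (LI LO : Type) := DAct of (LI + LO)%type | Delta.
Arguments Delta {LI LO}.

Section LTSdefs.
Variables (LI LO : finType) (A : LTS LI LO).

Definition IOTS : Prop := forall (s : st A) (i : LI), exists s', trans s (inl i) s'.

Definition quiescent (s : st A) : bool :=
  ~~ [exists o : LO, exists s' : st A, trans s (inr o) s'].

Definition step1 (s : st A) (a : dlab LI LO) (s' : st A) : Prop :=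
  match a with
  | DAct b => trans s b s'
  | Delta => s' = s /\ quiescent s
  end.

Fixpoint after (s : st A) (sigma : seq (dlab LI LO)) : st A -> Prop :=
  match sigma with
  | [::] => fun x => x = s
  | a :: sigma' => fun x => exists s', step1 s a s' /\ after s' sigma' x
  end.

Definition out (s : st A) (x : dlab LI LO) : Prop :=
  match x with
  | DAct (inr o) => exists s', trans s (inr o) s'
  | DAct (inl _) => False
  | Delta => quiescent s
  end.

Definition out_set (P : st A -> Prop) (x : dlab LI LO) : Prop :=
  exists s, P s /\ out s x.

Definition Straces (sigma : seq (dlab LI LO)) : Prop :=
  exists s, after (s0 A) sigma s.
End LTSdefs.

Definition ioco (LI LO : finType) (AI AS : LTS LI LO) : Prop :=
  forall sigma, Straces AS sigma ->
    forall x, out_set (after (s0 AI) sigma) x -> out_set (after (s0 AS) sigma) x.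

(* ---------- Single-clock timed automata in which every transition resets
   the clock c (so c = 0 on entering a location).  A transition
   (l, a, phi, {c}, l') is recorded by edge l a phi l'; guards phi and
   location invariants are predicates on the clock value. ---------- *)
Record TA (LI LO : finType) := {
  loc : finType;
  l0 : loc;
  edge : loc -> dlab LI LO -> (R -> Prop) -> loc -> Prop;
  inv : loc -> R -> Prop
}.

Section TAdefs.
Local Open Scope R_scope.
Variables (LI LO : finType) (M : R) (T : TA LI LO).

Definition tstep (l : loc T) (d : R) (a : dlab LI LO) (l' : loc T) : Prop :=
  0 <= d /\ exists phi, edge l a phi l' /\ phi d /\ inv l d.

Definition tquiescent (l : loc T) : Prop :=
  ~ (exists d (o : LO) l', d < M /\ tstep l d (DAct (inr o)) l').

Definition tout (l : loc T) (p : R * dlab LI LO) : Prop :=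
  (exists o : LO, p.2 = DAct (inr o) /\ exists l', tstep l p.1 p.2 l')
  \/ (p = (M, Delta) /\ tquiescent l).

Definition tout_set (P : loc T -> Prop) (p : R * dlab LI LO) : Prop :=
  exists l, P l /\ tout l p.

Definition tstep1 (l : loc T) (p : R * dlab LI LO) (l' : loc T) : Prop :=
  tstep l p.1 p.2 l' \/ (l' = l /\ p = (M, Delta) /\ tquiescent l).

Fixpoint tafter (l : loc T) (rho : seq (R * dlab LI LO)) : loc T -> Prop :=
  match rho with
  | [::] => fun x => x = l
  | p :: rho' => fun x => exists l', tstep1 l p l' /\ tafter l' rho' x
  end.

Definition Sttraces (rho : seq (R * dlab LI LO)) : Prop :=
  exists l, tafter (l0 T) rho l.

(* IOTA (for reference; tioco_M is intended for IOTA implementations) *)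
Definition IOTA : Prop :=
  forall (l : loc T) (i : LI) d, 0 <= d < M -> exists l', tstep l d (DAct (inl i)) l'.
End TAdefs.

Definition tioco (LI LO : finType) (M : R) (TI TS : TA LI LO) : Prop :=
  forall rho, Sttraces M TS rho ->
    forall p, tout_set M (tafter M (l0 TI) rho) p -> tout_set M (tafter M (l0 TS) rho) p.

Definition chi_edge (LI LO : finType) (M : R) (A : LTS LI LO)
    (l : st A) (a : dlab LI LO) (phi : R -> Prop) (l' : st A) : Prop :=
  (exists b, a = DAct b /\ trans l b l' /\ phi = (fun c => (c < M)%R))
  \/ (a = Delta /\ quiescent l /\ l' = l /\ phi = (fun c => c = M)).

Definition chi (LI LO : finType) (M : R) (A : LTS LI LO) : TA LI LO :=
  {| loc := st A; l0 := s0 A; edge := @chi_edge LI LO M A;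
     inv := fun _ c => (c <= M)%R |}.

(* Main.v *)
Require Import Defs.
From mathcomp Require Import all_boot.
From Stdlib Require Import Reals Lra.
Require Import Defs.

Section Aux.
Variables (LI LO : finType) (M : R) (A : LTS LI LO).
Hypothesis HM : (0 < M)%R.

Definition good (p : R * dlab LI LO) : Prop :=
  match p.2 with DAct _ => (0 <= p.1 < M)%R | Delta => p.1 = M end.

Lemma tstep_iff (l : st A) d a l' :
  tstep (T:=chi M A) l d a l' <->
  match a with DAct b => (0 <= d < M)%R /\ trans l b l'
             | Delta => d = M /\ l' = l /\ quiescent l end.
Proof.
unfold tstep; simpl; unfold chi_edge; split.
- intros [Hd [phi [E [Hphi Hinv]]]].
  destruct E as [[b [Ha [Ht Hp]]]|[Ha [Hq [Hl Hp]]]]; subst.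
  + split; [lra|exact Ht].
  + split; [reflexivity|split; [reflexivity|exact Hq]].
- destruct a as [b|].
  + intros [Hd Ht]; split; [lra|]. exists (fun c => (c < M)%R).
    split; [left; exists b; auto|split; [lra|lra]].
  + intros [Hd [Hl Hq]]; subst; split; [lra|]. exists (fun c => c = M).
    split; [right; auto|split; [reflexivity|lra]].
Qed.

Lemma tq_iff (l : st A) : tquiescent M (T:=chi M A) l <-> quiescent l.
Proof.
unfold tquiescent; split.
- intros Hn. apply/negP. move=> /existsP [o /existsP [s' Ht]].
  apply Hn. exists 0%R, o, s'. split; [exact HM|].
  apply tstep_iff. split; [lra|exact Ht].
- intros Hq [d [o [l' [Hd Hs]]]]. apply tstep_iff in Hs.
  destruct Hs as [_ Ht]. move/negP: Hq; apply.
  apply/existsP; exists o; apply/existsP; exists l'; exact Ht.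
Qed.

Lemma tstep1_iff (l : st A) p l' :
  tstep1 M (T:=chi M A) l p l' <-> good p /\ step1 (A:=A) l p.2 l'.
Proof.
destruct p as [d a]; unfold tstep1, good; simpl. rewrite tstep_iff.
destruct a as [b|]; simpl; split.
- intros [H|[_ [H _]]]; [exact H|discriminate].
- intros H; left; exact H.
- intros [[Hd [Hl Hq]]|[Hl [Hp Hq]]].
  + subst; auto.
  + inversion Hp; subst. apply tq_iff in Hq. auto.
- intros [Hd [Hl Hq]]; subst; left; auto.
Qed.

Lemma tafter_iff rho (l l' : st A) :
  tafter M (T:=chi M A) l rho l' <-> List.Forall good rho /\ after (A:=A) l (map snd rho) l'.
Proof.
revert l; induction rho as [|p rho IH]; intros l; simpl.
- split; [intros H; split; [constructor|exact H]|intros [_ H]; exact H].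
- split.
  + intros [s [H1 H2]]. apply tstep1_iff in H1. apply IH in H2.
    destruct H1 as [G1 S1]; destruct H2 as [G2 S2].
    split; [constructor; assumption|exists s; auto].
  + intros [HF [s [S1 S2]]]. inversion HF; subst. exists s; split.
    * apply tstep1_iff; auto.
    * apply IH; auto.
Qed.

Lemma tout_iff (l : st A) p : tout M (T:=chi M A) l p <-> good p /\ out (A:=A) l p.2.
Proof.
destruct p as [d a]; unfold tout, good; simpl. split.
- intros [[o [Ha [l' Hs]]]|[Hp Hq]].
  + subst. apply tstep_iff in Hs. destruct Hs as [Hd Ht]. split; [exact Hd|exists l'; exact Ht].
  + inversion Hp; subst. apply tq_iff in Hq. auto.
- destruct a as [[i|o]|]; simpl.
  + intros [_ []].
  + intros [Hd [l' Ht]]. left. exists o; split; [reflexivity|]. exists l'.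
    apply tstep_iff; auto.
  + intros [Hd Hq]; subst. right. split; [reflexivity|]. apply tq_iff; exact Hq.
Qed.

Definition tm (a : dlab LI LO) : R := match a with DAct _ => 0%R | Delta => M end.

Lemma good_tm a : good (tm a, a).
Proof. destruct a; unfold good, tm; simpl; lra. Qed.

Lemma Forall_tm sigma : List.Forall good (map (fun a => (tm a, a)) sigma).
Proof. induction sigma; simpl; constructor; auto using good_tm. Qed.

Lemma map_tm sigma : map snd (map (fun a => (tm a, a)) sigma) = sigma.
Proof. induction sigma; simpl; congruence. Qed.

End Aux.

Theorem theorem1 (LI LO : finType) (AI AS : LTS LI LO) (M : R) :
  IOTS AI -> (0 < M)%R ->
  (ioco AI AS <-> tioco M (chi M AI) (chi M AS)).
Proof.
intros _ HM; split.
- intros Hio rho [s Hs] p [l [Hl Ho]].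
  apply (@tafter_iff _ _ _ _ HM) in Hs. apply (@tafter_iff _ _ _ _ HM) in Hl.
  apply (@tout_iff _ _ _ _ HM) in Ho.
  destruct Hs as [Hg Hs]; destruct Hl as [_ Hl]; destruct Ho as [Gp Ho].
  destruct (Hio (map snd rho) (ex_intro _ s Hs) p.2 (ex_intro _ l (conj Hl Ho)))
    as [s' [H1 H2]].
  exists s'; split.
  + apply (@tafter_iff _ _ _ _ HM); auto.
  + apply (@tout_iff _ _ _ _ HM); auto.
- intros Ht sigma [s Hs] x [l [Hl Ho]].
  set rho := map (fun a => (@tm _ _ M a, a)) sigma.
  assert (Hr : Sttraces M (chi M AS) rho).
  { exists s. apply (@tafter_iff _ _ _ _ HM). unfold rho; rewrite map_tm.
    split; [apply (@Forall_tm _ _ _ HM)|exact Hs]. }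
  assert (Hp : tout_set M (tafter M (l0 (chi M AI)) rho) (@tm _ _ M x, x)).
  { exists l. split.
    - apply (@tafter_iff _ _ _ _ HM). unfold rho; rewrite map_tm.
      split; [apply (@Forall_tm _ _ _ HM)|exact Hl].
    - apply (@tout_iff _ _ _ _ HM). split; [apply (@good_tm _ _ _ HM)|exact Ho]. }
  destruct (Ht rho Hr _ Hp) as [l' [H1 H2]].
  apply (@tafter_iff _ _ _ _ HM) in H1. apply (@tout_iff _ _ _ _ HM) in H2.
  unfold rho in H1; rewrite map_tm in H1.
  exists l'; split; [apply H1|apply H2].
Qed.
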